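(* Let $\alpha \in \mathbb{R}_{>0}$ and $M_\alpha = \{f(\alpha) \mid f(x) \in \mathbb{N}_0[x,x^{-1}]\}$ as an additive monoid. Then $M_\alpha$ is an LFM if and only if it is a UFM.
   Context: $\mathbb{N}_0[x,x^{-1}]$ denotes the semiring of Laurent polynomials with coefficients in $\mathbb{N}_0$. For an atomic reduced additive monoid $M$ and nonzero $a \in M$, $\mathsf{Z}(a)$ is the set of factorizations of $a$ (formal sums of atoms, up to order, adding to $a$), and $|z|$ is the length of $z$ (number of atoms with repetition). $M$ is an LFM (length-factorial monoid) if it is atomic and for all $a \in M$ and $z,z' \in \mathsf{Z}(a)$, $|z| = |z'|$ implies $z = z'$; it is a UFM if it is atomic and $|\mathsf{Z}(a)| = 1$ for all nonzero $a$. *)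

(* Defs.v *)
From Stdlib Require Import Reals ZArith List Permutation.
Open Scope R_scope.

Definition sumR (l : list R) : R := fold_right Rplus 0 l.

(* Evaluation at [a] of the Laurent polynomial in N_0[x,x^{-1}] represented
   as the multiset (list) [l] of its monomial exponents, each monomial
   x^k occurring with multiplicity equal to its coefficient. *)
Definition laurent_eval (a : R) (l : list Z) : R :=
  sumR (map (fun k => powerRZ a k) l).

Definition M_alpha (a : R) (x : R) : Prop :=
  exists l : list Z, x = laurent_eval a l.

(* Generic notions for a (reduced) additive submonoid S of R, given by its
   carrier predicate.  The only unit of such a reduced monoid is 0. *)
Definition is_atom (S : R -> Prop) (u : R) : Prop :=
  S u /\ u <> 0 /\
  forall v w, S v -> S w -> u = v + w -> v = 0 \/ w = 0.

(* A factorization of a: a formal sum of atoms (a list of atoms, considered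
   up to order, i.e. up to Permutation) adding up to a.  Its length is the
   length of the list. *)
Definition is_factorization (S : R -> Prop) (a : R) (z : list R) : Prop :=
  Forall (is_atom S) z /\ sumR z = a.

Definition atomic (S : R -> Prop) : Prop :=
  forall a, S a -> a <> 0 -> exists z, is_factorization S a z.

Definition LFM (S : R -> Prop) : Prop :=
  atomic S /\
  forall a z z', S a -> is_factorization S a z -> is_factorization S a z' ->
    length z = length z' -> Permutation z z'.

Definition UFM (S : R -> Prop) : Prop :=
  atomic S /\
  forall a z z', S a -> a <> 0 -> is_factorization S a z ->
    is_factorization S a z' -> Permutation z z'.

(* Main.v *)
Require Import Defs.
From Stdlib Require Import Reals ZArith List Permutation.
From Stdlib Require Import Lra Lia.
Open Scope R_scope.

Lemma sumR_app l1 l2 : sumR (l1 ++ l2) = sumR l1 + sumR l2.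
Proof. induction l1; simpl; [lra| rewrite IHl1; lra]. Qed.

Lemma sumR_map_mul c l : sumR (map (fun x => c * x) l) = c * sumR l.
Proof. induction l; simpl; [lra| rewrite IHl; lra]. Qed.

Lemma le_eval a l : 0 < a -> 0 <= laurent_eval a l.
Proof.
  intros Ha; induction l; unfold laurent_eval in *; simpl; [lra|].
  pose proof (powerRZ_lt a a0 Ha); lra.
Qed.

Lemma M_nonneg a x : 0 < a -> M_alpha a x -> 0 <= x.
Proof. intros Ha [l ->]; apply le_eval; auto. Qed.

Lemma M_scale a k x : 0 < a -> M_alpha a x -> M_alpha a (powerRZ a k * x).
Proof.
  intros Ha [l ->]. exists (map (Z.add k) l).
  unfold laurent_eval; induction l; simpl; [lra|].
  rewrite powerRZ_add by lra. rewrite <- IHl. lra.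
Qed.

Lemma M_add a x y : M_alpha a x -> M_alpha a y -> M_alpha a (x + y).
Proof.
  intros [l ->] [l' ->]. exists (l ++ l'). unfold laurent_eval.
  rewrite map_app, sumR_app; auto.
Qed.

Lemma atom_pos a u : 0 < a -> is_atom (M_alpha a) u -> 0 < u.
Proof. intros Ha [H1 [H2 _]]. pose proof (M_nonneg _ _ Ha H1). lra. Qed.

Lemma atom_scale a k u : 0 < a -> is_atom (M_alpha a) u ->
  is_atom (M_alpha a) (powerRZ a k * u).
Proof.
  intros Ha [H1 [H2 H3]]. pose proof (powerRZ_lt a k Ha) as Hc.
  split; [apply M_scale; auto|]. split.
  - intro E. apply Rmult_integral in E. lra.
  - intros v w Hv Hw E.
    assert (Ei : powerRZ a (- k) * powerRZ a k = 1).
    { rewrite powerRZ_neg'. field. lra. }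
    destruct (H3 (powerRZ a (-k) * v) (powerRZ a (-k) * w)) as [F|F];
      try (apply M_scale; auto).
    + replace u with (powerRZ a (-k) * (powerRZ a k * u)) by (rewrite <- Rmult_assoc, Ei; lra).
      rewrite E; ring.
    + left. pose proof (powerRZ_lt a (-k) Ha). apply Rmult_integral in F. lra.
    + right. pose proof (powerRZ_lt a (-k) Ha). apply Rmult_integral in F. lra.
Qed.

Lemma fact_zero a z : 0 < a -> is_factorization (M_alpha a) 0 z -> z = nil.
Proof.
  intros Ha [F S]. destruct z as [|u z]; auto. exfalso.
  inversion F; subst. simpl in S.
  pose proof (atom_pos _ _ Ha H1).
  assert (0 <= sumR z).
  { clear -H2 Ha. induction z; simpl; [lra|]. inversion H2; subst.
    pose proof (atom_pos _ _ Ha H1). specialize (IHz H3). lra. }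
  lra.
Qed.

Lemma exists_big a : 0 < a -> a <> 1 -> forall X, exists k, X < powerRZ a k.
Proof.
  intros Ha Hn X. destruct (Rlt_or_le 1 a) as [H1|H1].
  - destruct (Pow_x_infinity a) with (b := X + 1) as [N HN].
    { rewrite Rabs_pos_eq; lra. }
    exists (Z.of_nat N). rewrite <- pow_powerRZ.
    specialize (HN N (le_n _)). rewrite Rabs_pos_eq in HN.
    + lra.
    + apply pow_le; lra.
  - assert (Hi : 1 < / a).
    { rewrite <- Rinv_1. apply Rinv_lt_contravar; lra. }
    destruct (Pow_x_infinity (/ a)) with (b := X + 1) as [N HN].
    { rewrite Rabs_pos_eq; lra. }
    exists (- Z.of_nat N)%Z. rewrite powerRZ_neg', <- pow_powerRZ, <- pow_inv.
    specialize (HN N (le_n _)). rewrite Rabs_pos_eq in HN.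
    + lra.
    + apply pow_le; lra.
Qed.

Definition leb_R (B x : R) : bool := if Rle_dec x B then true else false.

Lemma perm_filter {A} (f : A -> bool) l l' :
  Permutation l l' -> Permutation (filter f l) (filter f l').
Proof.
  induction 1; simpl.
  - constructor.
  - destruct (f x); auto.
  - destruct (f x), (f y); auto. constructor.
  - eapply Permutation_trans; eauto.
Qed.

Lemma filter_all B l : Forall (fun x => x <= B) l -> filter (leb_R B) l = l.
Proof.
  induction 1; simpl; auto. unfold leb_R at 1.
  destruct (Rle_dec x B); [f_equal; auto| lra].
Qed.

Lemma filter_none B l : Forall (fun x => B < x) l -> filter (leb_R B) l = nil.
Proof.
  induction 1; simpl; auto. unfold leb_R at 1.
  destruct (Rle_dec x B); [lra| auto].
Qed.

Definition minl (l : list R) : R := fold_right Rmin 1 l.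

Lemma minl_pos l : Forall (fun x => 0 < x) l -> 0 < minl l.
Proof.
  induction 1; simpl; [lra|]. unfold Rmin; destruct (Rle_dec x (minl l)); lra.
Qed.

Lemma minl_le l : Forall (fun x => minl l <= x) l.
Proof.
  induction l; simpl; constructor.
  - apply Rmin_l.
  - eapply Forall_impl; [|exact IHl]. intros x Hx.
    pose proof (Rmin_r a (minl l)); lra.
Qed.

Lemma le_sumR l : Forall (fun x => 0 < x) l -> Forall (fun x => x <= sumR l) l.
Proof.
  induction 1; simpl; constructor.
  - assert (0 <= sumR l).
    { clear -H0. induction H0; simpl; lra. }
    lra.
  - eapply Forall_impl; [|exact IHForall]. intros y Hy. lra.
Qed.

Lemma atoms_one u : is_atom (M_alpha 1) u -> u = 1.
Proof.
  intros [[l ->] [H2 H3]]. destruct l as [|k l].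
  - unfold laurent_eval in H2; simpl in H2; lra.
  - unfold laurent_eval in *; simpl in *. rewrite powerRZ_R1 in *.
    destruct (H3 1 (sumR (map (fun k0 : Z => powerRZ 1 k0) l))) as [F|F].
    + exists (0%Z :: nil); unfold laurent_eval; simpl. try rewrite powerRZ_R1; lra.
    + exists l; reflexivity.
    + reflexivity.
    + lra.
    + rewrite F; lra.
Qed.

Lemma all_one z : Forall (fun u => u = 1) z -> z = repeat 1 (length z).
Proof. induction 1; simpl; auto. subst; f_equal; auto. Qed.

Lemma sum_ones n : sumR (repeat 1 n) = INR n.
Proof. induction n; simpl; [reflexivity|]. rewrite IHn. destruct n; simpl; lra. Qed.

Theorem proposition5p3 (alpha : R) (Halpha : 0 < alpha) :
  LFM (M_alpha alpha) <-> UFM (M_alpha alpha).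
Proof.
  split.
  - intros [Hat HL]. split; auto.
    intros a z z' Ha Ha0 Hz Hz'.
    destruct (Req_dec alpha 1) as [E|E].
    + subst alpha.
      destruct Hz as [Fz Sz], Hz' as [Fz' Sz'].
      assert (Ez := all_one z (Forall_impl _ atoms_one Fz)).
      assert (Ez' := all_one z' (Forall_impl _ atoms_one Fz')).
      assert (length z = length z').
      { apply INR_eq. rewrite <- !sum_ones, <- Ez, <- Ez'. lra. }
      rewrite Ez, Ez', H. apply Permutation_refl.
    + destruct Hz as [Fz Sz], Hz' as [Fz' Sz'].
      set (L := z ++ z').
      assert (FL : Forall (is_atom (M_alpha alpha)) L) by (apply Forall_app; auto).
      assert (PL : Forall (fun x => 0 < x) L).
      { eapply Forall_impl; [|exact FL]. intros; eapply atom_pos; eauto. }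
      set (B := sumR L). set (m := minl L).
      assert (Hm : 0 < m) by (apply minl_pos; auto).
      destruct (exists_big alpha Halpha E (B / m)) as [k Hk].
      set (c := powerRZ alpha k).
      assert (Hc : 0 < c) by (apply powerRZ_lt; auto).
      assert (HB : Forall (fun x => x <= B) L) by (apply le_sumR; auto).
      assert (Hbig : forall l, incl l L -> Forall (fun x => B < x) (map (fun x => c * x) l)).
      { intros l Hl. apply Forall_forall. intros y Hy. apply in_map_iff in Hy.
        destruct Hy as [x [<- Hx]].
        assert (m <= x) by (eapply Forall_forall; [apply minl_le| apply Hl; auto]).
        assert (B < c * m).
        { apply (Rmult_lt_compat_r m) in Hk; auto. unfold Rdiv in Hk.
          rewrite Rmult_assoc, Rinv_l in Hk; [unfold c; lra | apply Rgt_not_eq; lra]. }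
        assert (c * m <= c * x) by (apply Rmult_le_compat_l; lra). lra. }
      assert (Hfa : forall l, is_factorization (M_alpha alpha) a l ->
                is_factorization (M_alpha alpha) (c * a) (map (fun x => c * x) l)).
      { intros l [Fl Sl]. split.
        - apply Forall_map. eapply Forall_impl; [|exact Fl].
          intros; apply atom_scale; auto.
        - rewrite sumR_map_mul, Sl; auto. }
      assert (P := HL (a + c * a) (z ++ map (fun x => c * x) z')
                      (z' ++ map (fun x => c * x) z)).
      destruct (Hfa z' (conj Fz' Sz')) as [G1 G2].
      destruct (Hfa z (conj Fz Sz)) as [G3 G4].
      assert (Pm : Permutation (z ++ map (fun x => c * x) z')
                               (z' ++ map (fun x => c * x) z)).
      { apply P.
        - apply M_add; auto. apply M_scale; auto.
        - split; [apply Forall_app; auto| rewrite sumR_app; lra].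
        - split; [apply Forall_app; auto| rewrite sumR_app; lra].
        - rewrite !length_app, !length_map; lia. }
      apply (perm_filter (leb_R B)) in Pm.
      rewrite !filter_app in Pm.
      rewrite (filter_none B (map _ z')), (filter_none B (map _ z)) in Pm.
      2,3: apply Hbig; unfold L; intros x Hx; apply in_or_app; auto.
      rewrite !filter_all, !app_nil_r in Pm; auto.
      * eapply incl_Forall; [|exact HB]. intros x Hx; apply in_or_app; auto.
      * eapply incl_Forall; [|exact HB]. intros x Hx; apply in_or_app; auto.
  - intros [Hat HU]. split; auto.
    intros a z z' Ha Hz Hz' Hl.
    destruct (Req_dec a 0) as [E|E].
    + subst a. rewrite (fact_zero _ _ Halpha Hz), (fact_zero _ _ Halpha Hz').
      constructor.
    + apply (HU a); auto.
Qed.
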